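(* Let $E$ be a graph, $K$ a field with involution, $R$ an involutive $K$-algebra, and $t$ a canonical, $K$-linear, $R$-valued trace on $L_K(E)$. Then $t$ is positive if and only if (P) $t\big(v-\sum_{e\in I}\mathbf{r}(e)\big)\ge 0$ for every vertex $v$ and every finite subset $I\subseteq\mathbf{s}^{-1}(v)$.
   Context: A (directed) graph $E=(E^0,E^1,\mathbf{s},\mathbf{r})$ has vertex set $E^0$, edge set $E^1$, source and range maps; no finiteness or countability is assumed. A path is a vertex $v$ (length $0$, $\mathbf{s}(v)=\mathbf{r}(v)=v$) or a sequence $p=e_1\cdots e_n$ of edges with $\mathbf{r}(e_i)=\mathbf{s}(e_{i+1})$, $\mathbf{s}(p)=\mathbf{s}(e_1)$, $\mathbf{r}(p)=\mathbf{r}(e_n)$. A vertex $v$ is regular if $\mathbf{s}^{-1}(v)$ is nonempty and finite. $K$ is a field with an arbitrary involution $a\mapsto a^*$ (possibly the identity). $L_K(E)$ is the free $K$-algebra generated by $E^0\cup E^1\cup\{e^*:e\in E^1\}$ subject to (V) $vw=\delta_{v,w}v$; (E1) $\mathbf{s}(e)e=e\mathbf{r}(e)=e$; (E2) $\mathbf{r}(e)e^*=e^*\mathbf{s}(e)=e^*$; (CK1) $e^*f=\delta_{e,f}\mathbf{r}(e)$; (CK2) $v=\sum_{e\in\mathbf{s}^{-1}(v)}ee^*$ for regular $v$; with $p^*=e_n^*\cdots e_1^*$, $v^*=v$, it is an involutive $K$-algebra via $(\sum a_ip_iq_i^* )^*=\sum a_i^*q_ip_i^*$. An involutive $K$-algebra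 is a $K$-algebra with an involution (additive, $(xy)^*=y^*x^*$, $x^{**}=x$) such that $(ax)^*=a^*x^*$ for $a\in K$. An element $x$ is positive, $x\ge0$, if it is a finite sum of elements $zz^*$; $x\ge y$ means $x-y\ge 0$. A trace is an additive map with $t(xy)=t(yx)$; $K$-linear means $t(ax)=at(x)$; $t$ is positive if $x\ge0$ implies $t(x)\ge0$. A trace $t$ on $L_K(E)$ is canonical if $t(pq^* )=\delta_{p,q}\,t(\mathbf{r}(p))$ for all paths $p,q$ with $\mathbf{r}(p)=\mathbf{r}(q)$. *)

(* Defs.v *)
(* Leavitt path algebras over arbitrary graphs, presented
   literally as "free (non-unital) K-algebra on the generators modulo the
   relations": terms over the generators modulo the congruence generated by
   the K-algebra axioms and the relations (V),(E1),(E2),(CK1),(CK2). *)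
From HB Require Import structures.
From mathcomp Require Import all_boot all_algebra.
From Stdlib Require List.
Set Implicit Arguments. Unset Strict Implicit. Unset Printing Implicit Defensive.
Import GRing.Theory.
Local Open Scope ring_scope.

Record graph := Graph {
  vert : Type; edge : Type; gsrc : edge -> vert; grng : edge -> vert }.

Definition field_involution (K : fieldType) (ks : K -> K) : Prop :=
  (forall a b, ks (a + b) = ks a + ks b) /\
  (forall a b, ks (a * b) = ks a * ks b) /\
  (forall a, ks (ks a) = a).

Record invAlg (K : fieldType) (ks : K -> K) := InvAlg {
  ia_sort :> lmodType K;
  ia_mul : ia_sort -> ia_sort -> ia_sort;
  ia_star : ia_sort -> ia_sort;
  ia_mulA : forall x y z, ia_mul x (ia_mul y z) = ia_mul (ia_mul x y) z;
  ia_mulDl : forall x y z, ia_mul (x + y) z = ia_mul x z + ia_mul y z;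
  ia_mulDr : forall x y z, ia_mul x (y + z) = ia_mul x y + ia_mul x z;
  ia_mulZl : forall (a : K) x y, ia_mul (a *: x) y = a *: ia_mul x y;
  ia_mulZr : forall (a : K) x y, ia_mul x (a *: y) = a *: ia_mul x y;
  ia_starD : forall x y, ia_star (x + y) = ia_star x + ia_star y;
  ia_starM : forall x y, ia_star (ia_mul x y) = ia_mul (ia_star y) (ia_star x);
  ia_starK : forall x, ia_star (ia_star x) = x;
  ia_starZ : forall (a : K) x, ia_star (a *: x) = ks a *: ia_star x }.

Definition nonneg (K : fieldType) (ks : K -> K) (R : invAlg ks) (x : R) : Prop :=
  exists zs : seq R, x = \sum_(z <- zs) ia_mul z (ia_star z).

Section Leavitt.
Variables (K : fieldType) (E : graph).

Inductive lterm : Type :=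
  | LV (v : vert E)
  | LE (e : edge E)
  | LG (e : edge E)          (* ghost edge e^* *)
  | LZero
  | LAdd (x y : lterm)
  | LMul (x y : lterm)
  | LScale (a : K) (x : lterm).

Definition lsum (xs : seq lterm) : lterm := foldr LAdd LZero xs.

(* l is a duplicate-free nonempty enumeration of s^{-1}(v); such l exists
   iff v is regular *)
Definition src_enum (v : vert E) (l : seq (edge E)) : Prop :=
  l <> [::] /\ List.NoDup l /\ (forall e, gsrc e = v <-> List.In e l).

Inductive leqv : lterm -> lterm -> Prop :=
  | leqv_refl x : leqv x x
  | leqv_sym x y : leqv x y -> leqv y x
  | leqv_trans x y z : leqv x y -> leqv y z -> leqv x z
  | leqv_add x x' y y' : leqv x x' -> leqv y y' -> leqv (LAdd x y) (LAdd x' y')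
  | leqv_mul x x' y y' : leqv x x' -> leqv y y' -> leqv (LMul x y) (LMul x' y')
  | leqv_scale a x x' : leqv x x' -> leqv (LScale a x) (LScale a x')
  | ax_addC x y : leqv (LAdd x y) (LAdd y x)
  | ax_addA x y z : leqv (LAdd (LAdd x y) z) (LAdd x (LAdd y z))
  | ax_add0 x : leqv (LAdd x LZero) x
  | ax_addN x : leqv (LAdd x (LScale (-1) x)) LZero
  | ax_scaleDr a x y : leqv (LScale a (LAdd x y)) (LAdd (LScale a x) (LScale a y))
  | ax_scaleDl a b x : leqv (LScale (a + b) x) (LAdd (LScale a x) (LScale b x))
  | ax_scaleA a b x : leqv (LScale a (LScale b x)) (LScale (a * b) x)
  | ax_scale1 x : leqv (LScale 1 x) x
  | ax_mulA x y z : leqv (LMul (LMul x y) z) (LMul x (LMul y z))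
  | ax_mulDr x y z : leqv (LMul x (LAdd y z)) (LAdd (LMul x y) (LMul x z))
  | ax_mulDl x y z : leqv (LMul (LAdd x y) z) (LAdd (LMul x z) (LMul y z))
  | ax_scaleMl a x y : leqv (LScale a (LMul x y)) (LMul (LScale a x) y)
  | ax_scaleMr a x y : leqv (LScale a (LMul x y)) (LMul x (LScale a y))
  | rel_V1 v : leqv (LMul (LV v) (LV v)) (LV v)
  | rel_V0 v w : v <> w -> leqv (LMul (LV v) (LV w)) LZero
  | rel_E1s e : leqv (LMul (LV (gsrc e)) (LE e)) (LE e)
  | rel_E1r e : leqv (LMul (LE e) (LV (grng e))) (LE e)
  | rel_E2r e : leqv (LMul (LV (grng e)) (LG e)) (LG e)
  | rel_E2s e : leqv (LMul (LG e) (LV (gsrc e))) (LG e)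
  | rel_CK1 e : leqv (LMul (LG e) (LE e)) (LV (grng e))
  | rel_CK1' e f : e <> f -> leqv (LMul (LG e) (LE f)) LZero
  | rel_CK2 v l : src_enum v l ->
      leqv (LV v) (lsum [seq LMul (LE e) (LG e) | e <- l]).

Fixpoint lstar (ks : K -> K) (x : lterm) : lterm :=
  match x with
  | LV v => LV v
  | LE e => LG e
  | LG e => LE e
  | LZero => LZero
  | LAdd x y => LAdd (lstar ks x) (lstar ks y)
  | LMul x y => LMul (lstar ks y) (lstar ks x)
  | LScale a x => LScale (ks a) (lstar ks x)
  end.

Inductive gpath : Type :=
  | PVert (v : vert E)
  | PEdges (e : edge E) (es : seq (edge E)).

Fixpoint echain (e : edge E) (es : seq (edge E)) : Prop :=
  match es with
  | [::] => True
  | f :: fs => grng e = gsrc f /\ echain f fs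
  end.

Definition is_path (p : gpath) : Prop :=
  match p with PVert _ => True | PEdges e es => echain e es end.

Definition prng (p : gpath) : vert E :=
  match p with PVert v => v | PEdges e es => grng (last e es) end.

Definition pterm (p : gpath) : lterm :=
  match p with
  | PVert v => LV v
  | PEdges e es => foldl (fun acc f => LMul acc (LE f)) (LE e) es
  end.

Variables (ks : K -> K) (R : invAlg ks) (t : lterm -> R).

(* t is (induced by) a map on L_K(E) *)
Definition lpa_map : Prop := forall x y, leqv x y -> t x = t y.

Definition is_trace : Prop :=
  lpa_map /\ (forall x y, t (LAdd x y) = t x + t y) /\
  (forall x y, t (LMul x y) = t (LMul y x)).

Definition is_Klinear : Prop := forall a x, t (LScale a x) = a *: t x.

Definition is_canonical : Prop :=
  forall p q, is_path p -> is_path q -> prng p = prng q ->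
    (p = q -> t (LMul (pterm p) (lstar ks (pterm q))) = t (LV (prng p))) /\
    (p <> q -> t (LMul (pterm p) (lstar ks (pterm q))) = 0).

Definition is_positive : Prop :=
  forall x, (exists zs : seq lterm,
               leqv x (lsum [seq LMul z (lstar ks z) | z <- zs])) ->
  nonneg (t x).

Definition condP : Prop :=
  forall (v : vert E) (I : seq (edge E)),
    List.NoDup I -> (forall e, List.In e I -> gsrc e = v) ->
    nonneg (t (LAdd (LV v) (LScale (-1) (lsum [seq LV (grng e) | e <- I])))).

End Leavitt.

(* Main.v *)
Require Import Defs.
From mathcomp Require Import all_boot all_algebra.
From Stdlib Require Import Setoid Morphisms ClassicalEpsilon.
Set Implicit Arguments. Unset Strict Implicit. Unset Printing Implicit Defensive.
Import GRing.Theory.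
Local Open Scope ring_scope.

Definition cb (P : Prop) : bool :=
  if excluded_middle_informative P then true else false.
Lemma cbP (P : Prop) : reflect P (cb P).
Proof. rewrite /cb; case: excluded_middle_informative => h; by constructor. Qed.
Lemma cbT (P : Prop) : P -> cb P = true.
Proof. by move=> h; apply/cbP. Qed.
Lemma cbF (P : Prop) : ~ P -> cb P = false.
Proof. by move=> h; apply/cbP. Qed.

Section LA.
Variables (K : fieldType) (E : graph).
Local Notation T := (lterm K E).
Local Notation Z := (@LZero K E).
Local Notation LV := (@LV K E).
Local Notation LE := (@LE K E).
Local Notation LG := (@LG K E).

#[global] Instance leqv_equiv : Equivalence (@leqv K E).
Proof. split; [exact: leqv_refl | exact: leqv_sym | exact: leqv_trans]. Qed.
#[global] Instance LAdd_prop : Proper (@leqv K E ==> @leqv K E ==> @leqv K E) (@LAdd K E).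
Proof. move=> ? ? h ? ? h'; exact: leqv_add. Qed.
#[global] Instance LMul_prop : Proper (@leqv K E ==> @leqv K E ==> @leqv K E) (@LMul K E).
Proof. move=> ? ? h ? ? h'; exact: leqv_mul. Qed.
#[global] Instance LScale_prop a : Proper (@leqv K E ==> @leqv K E) (@LScale K E a).
Proof. move=> ? ? h; exact: leqv_scale. Qed.

Hint Resolve leqv_refl : core.

Lemma l0add (x : T) : leqv (LAdd Z x) x.
Proof. by rewrite ax_addC ax_add0. Qed.

Lemma ldouble0 (y : T) : leqv y (LAdd y y) -> leqv y Z.
Proof.
move=> h.
transitivity (LAdd (LAdd y y) (LScale (-1) y)).
  by rewrite ax_addA ax_addN ax_add0.
by rewrite -h ax_addN.
Qed.

Lemma lscale0 a : leqv (LScale a Z) Z.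
Proof. apply: ldouble0; by rewrite -ax_scaleDr ax_add0. Qed.
Lemma lmul0r (x : T) : leqv (LMul x Z) Z.
Proof. apply: ldouble0; by rewrite -ax_mulDr ax_add0. Qed.
Lemma lmul0l (x : T) : leqv (LMul Z x) Z.
Proof. apply: ldouble0; by rewrite -ax_mulDl ax_add0. Qed.

Lemma lsum_cat (A B : seq T) : leqv (lsum (A ++ B)) (LAdd (lsum A) (lsum B)).
Proof.
elim: A => [|a A IH] /=; first by rewrite l0add.
by rewrite IH ax_addA.
Qed.

Lemma lsum_scale a (A : seq T) : leqv (LScale a (lsum A)) (lsum (map (LScale a) A)).
Proof.
elim: A => [|x A IH] /=; first exact: lscale0.
by rewrite ax_scaleDr IH.
Qed.

Lemma lsum_mull (A : seq T) y : leqv (LMul (lsum A) y) (lsum (map (fun a => LMul a y) A)).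
Proof.
elim: A => [|x A IH] /=; first exact: lmul0l.
by rewrite ax_mulDl IH.
Qed.

Lemma lsum_mulr (A : seq T) y : leqv (LMul y (lsum A)) (lsum (map (fun a => LMul y a) A)).
Proof.
elim: A => [|x A IH] /=; first exact: lmul0r.
by rewrite ax_mulDr IH.
Qed.

End LA.

Section Star.
Variables (K : fieldType) (E : graph) (ks : K -> K).
Hypothesis Hks : field_involution ks.
Local Notation T := (lterm K E).
Local Notation Z := (@LZero K E).
Hint Resolve leqv_refl : core.

Lemma ksD a b : ks (a + b) = ks a + ks b. Proof. by case: Hks. Qed.
Lemma ksM a b : ks (a * b) = ks a * ks b. Proof. by case: Hks => _ []. Qed.
Lemma ksK a : ks (ks a) = a. Proof. by case: Hks => _ []. Qed.
Lemma ks0 : ks 0 = 0.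
Proof. by apply: (addrI (ks 0)); rewrite addr0 -ksD addr0. Qed.
Lemma ks1 : ks 1 = 1.
Proof.
have h := ksM 1 1; rewrite mulr1 in h.
have : ks 1 * (ks 1 - 1) = 0 by rewrite mulrBr mulr1 -h subrr.
move/eqP; rewrite mulf_eq0 subr_eq0 => /orP [/eqP h0|/eqP //].
by have := ksK 1; rewrite h0 ks0 => /eqP; rewrite eq_sym oner_eq0.
Qed.
Lemma ksN a : ks (- a) = - ks a.
Proof. by apply/eqP; rewrite -subr_eq0 opprK -ksD addNr ks0. Qed.
Lemma ksN1 : ks (-1) = -1. Proof. by rewrite ksN ks1. Qed.

Lemma lstar_lsum (A : seq T) : lstar ks (lsum A) = lsum (map (lstar ks) A).
Proof. by elim: A => //= a A ->. Qed.

Lemma lstar_leqv (x y : T) : leqv x y -> leqv (lstar ks x) (lstar ks y).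
Proof.
elim=> {x y} /=.
- by [].
- by move=> x y _ h; symmetry.
- by move=> x y z _ h1 _ h2; rewrite h1.
- by move=> x x' y y' _ h1 _ h2; rewrite h1 h2.
- by move=> x x' y y' _ h1 _ h2; rewrite h1 h2.
- by move=> a x x' _ h; rewrite h.
- by move=> x y; apply: ax_addC.
- by move=> x y z; apply: ax_addA.
- by move=> x; apply: ax_add0.
- by move=> x; rewrite ksN1; apply: ax_addN.
- by move=> a x y; apply: ax_scaleDr.
- by move=> a b x; rewrite ksD; apply: ax_scaleDl.
- by move=> a b x; rewrite ksM; apply: ax_scaleA.
- by move=> x; rewrite ks1; apply: ax_scale1.
- by move=> x y z; symmetry; apply: ax_mulA.
- by move=> x y z; apply: ax_mulDl.
- by move=> x y z; apply: ax_mulDr.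
- by move=> a x y; apply: ax_scaleMr.
- by move=> a x y; apply: ax_scaleMl.
- by move=> v; apply: rel_V1.
- by move=> v w h; apply: rel_V0 => e; apply: h.
- by move=> e; apply: rel_E2s.
- by move=> e; apply: rel_E2r.
- by move=> e; apply: rel_E1r.
- by move=> e; apply: rel_E1s.
- by move=> e; apply: rel_CK1.
- by move=> e f h; apply: rel_CK1' => ef; apply: h.
- move=> v l hl; rewrite lstar_lsum -map_comp; exact: rel_CK2.
Qed.

End Star.

Section Paths.
Variables (K : fieldType) (E : graph).
Local Notation T := (lterm K E).
Local Notation Z := (LZero K E).
Local Notation LV := (@LV K E).
Local Notation LE := (@LE K E).
Local Notation LG := (@LG K E).
Hint Resolve leqv_refl : core.

Fixpoint chain (v : vert E) (l : seq (edge E)) : Prop :=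
  match l with [::] => True | e :: l' => gsrc e = v /\ chain (grng e) l' end.
Fixpoint rng (v : vert E) (l : seq (edge E)) : vert E :=
  match l with [::] => v | e :: l' => rng (grng e) l' end.
Fixpoint ptm (v : vert E) (l : seq (edge E)) : T :=
  match l with [::] => LV v | e :: l' => LMul (LE e) (ptm (grng e) l') end.
Fixpoint gtm (v : vert E) (l : seq (edge E)) : T :=
  match l with [::] => LV v | e :: l' => LMul (gtm (grng e) l') (LG e) end.

Lemma lstar_ptm ks v l : lstar ks (ptm v l) = gtm v l.
Proof. by elim: l v => //= e l IH v; rewrite IH. Qed.
Lemma lstar_gtm ks v l : lstar ks (gtm v l) = ptm v l.
Proof. by elim: l v => //= e l IH v; rewrite IH. Qed.

Lemma rng_cat u p s : rng u (p ++ s) = rng (rng u p) s.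
Proof. by elim: p u => //= e p IH u. Qed.
Lemma chain_cat u p s : chain u (p ++ s) <-> chain u p /\ chain (rng u p) s.
Proof.
elim: p u => /= [|e p IH] u; first by split => // [[]].
rewrite IH; tauto.
Qed.

Lemma absorb_l u p : chain u p -> leqv (LMul (LV u) (ptm u p)) (ptm u p).
Proof.
case: p => [|e p] /= h; first exact: rel_V1.
case: h => <- _; rewrite -ax_mulA; by rewrite rel_E1s.
Qed.
Lemma absorb_r w q : chain w q -> leqv (LMul (gtm w q) (LV w)) (gtm w q).
Proof.
case: q => [|e q] /= h; first exact: rel_V1.
case: h => <- _; rewrite ax_mulA; by rewrite rel_E2s.
Qed.
Lemma zero_l w u p : chain u p -> w <> u -> leqv (LMul (LV w) (ptm u p)) Z.
Proof.
move=> h wu; rewrite -(absorb_l h) -ax_mulA rel_V0 //; exact: lmul0l.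
Qed.
Lemma zero_r w q u : chain w q -> w <> u -> leqv (LMul (gtm w q) (LV u)) Z.
Proof.
move=> h wu; rewrite -(absorb_r h) ax_mulA rel_V0 //; exact: lmul0r.
Qed.

Lemma concat u p s : chain u p -> chain (rng u p) s ->
  leqv (LMul (ptm u p) (ptm (rng u p) s)) (ptm u (p ++ s)).
Proof.
elim: p u => [|e p IH] u /= hp hs; first exact: absorb_l.
case: hp => _ hp; by rewrite ax_mulA IH.
Qed.

Lemma core q : forall w u p, chain w q -> chain u p ->
 (forall s, u = w -> p = q ++ s -> leqv (LMul (gtm w q) (ptm u p)) (ptm (rng w q) s)) /\
 (forall s, u = w -> q = p ++ s -> leqv (LMul (gtm w q) (ptm u p)) (gtm (rng u p) s)) /\
 ((u <> w \/ ((forall s, p <> q ++ s) /\ (forall s, q <> p ++ s))) ->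
    leqv (LMul (gtm w q) (ptm u p)) Z).
Proof.
elim: q => [|e q IH] w u p hq hp /=.
  split; [|split].
  - move=> s uw ps; subst; exact: absorb_l.
  - move=> s -> h; move: h hp; case: p => [|f p]; case: s => [|g s] //= _ _.
    exact: rel_V1.
  - case=> [uw|[h1 h2]]; first by apply: zero_l => // wu; apply: uw.
    by case: (h1 p).
case: hq => se hq.
case: p hp => [|f p] hp /=.
  split; [|split].
  - by [].
  - move=> s -> <- /=; exact: (@absorb_r w (e :: q)).
  - case=> [uw|[h1 h2]]; last by case: (h2 (e :: q)).
    apply: (@zero_r w (e :: q)) => //= wu; by apply: uw.
case: hp => sf hp.
have hX : leqv (LMul (LMul (gtm (grng e) q) (LG e)) (LMul (LE f) (ptm (grng f) p)))
               (LMul (gtm (grng e) q) (LMul (LMul (LG e) (LE f)) (ptm (grng f) p))).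
  by rewrite !ax_mulA.
case: (excluded_middle_informative (e = f)) => [ef|ef].
  subst f.
  have hX' : leqv (LMul (LMul (gtm (grng e) q) (LG e)) (LMul (LE e) (ptm (grng e) p)))
                  (LMul (gtm (grng e) q) (ptm (grng e) p)).
    by rewrite hX rel_CK1 absorb_l.
  have [I1 [I2 I3]] := IH (grng e) (grng e) p hq hp.
  split; [|split].
  - move=> s _ [] hs; rewrite hX'; exact: I1.
  - move=> s _ [] hs; rewrite hX'; exact: I2.
  - case=> [uw|[h1 h2]]; first by case: uw; rewrite -se -sf.
    rewrite hX'; apply: I3; right; split => s hs.
      by apply: (h1 s); rewrite hs.
    by apply: (h2 s); rewrite hs.
have h0 : leqv (LMul (LMul (gtm (grng e) q) (LG e)) (LMul (LE f) (ptm (grng f) p))) Z.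
  by rewrite hX rel_CK1' // lmul0l lmul0r.
split; [|split].
- by move=> s _ [] fe _; case: ef; rewrite fe.
- by move=> s _ [] ef' _; case: ef.
- by [].
Qed.

Definition topath (u : vert E) (p : seq (edge E)) : gpath E :=
  match p with [::] => PVert u | e :: es => PEdges e es end.

Lemma foldl_proper (l : seq (edge E)) (a b : T) : leqv a b ->
  leqv (foldl (fun acc f => LMul acc (LE f)) a l) (foldl (fun acc f => LMul acc (LE f)) b l).
Proof. elim: l a b => //= f l IH a b h; apply: IH; by rewrite h. Qed.

Lemma ptm_fold l : forall w (x : T), chain w l ->
  leqv (LMul x (ptm w l)) (foldl (fun acc f => LMul acc (LE f)) (LMul x (LV w)) l).
Proof.
elim: l => [|f l IH] w x //= [sf hl].
transitivity (LMul (LMul x (LE f)) (ptm (grng f) l)); first by symmetry; apply: ax_mulA.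
rewrite IH //; apply: foldl_proper.
rewrite ax_mulA rel_E1r ax_mulA -sf rel_E1s; reflexivity.
Qed.

Lemma ptm_pterm u p : chain u p -> leqv (ptm u p) (pterm K (topath u p)).
Proof.
case: p => [|e p] //= [_ hp].
rewrite ptm_fold //; apply: foldl_proper; exact: rel_E1r.
Qed.

Lemma topath_path u p : chain u p -> is_path (topath u p).
Proof.
case: p => [|e p] //= [_ hp].
elim: p e hp => //= f p IH e [-> hp]; split => //; exact: IH.
Qed.

Lemma topath_rng u p : chain u p -> prng (topath u p) = rng u p.
Proof.
case: p => [|e p] //= _.
by elim: p e => //= f p IH e.
Qed.

Lemma topath_inj u p u' p' : chain u p -> chain u' p' ->
  topath u p = topath u' p' -> u = u' /\ p = p'.
Proof.
case: p => [|e p]; case: p' => [|e' p'] //=; first by move=> _ _ [].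
by move=> [<- _] [<- _] [-> ->].
Qed.

End Paths.

Section NF.
Variables (K : fieldType) (E : graph) (ks : K -> K).
Hypothesis Hks : field_involution ks.
Local Notation T := (lterm K E).
Local Notation Z := (LZero K E).
Local Notation LV := (@LV K E).
Local Notation LE := (@LE K E).
Local Notation LG := (@LG K E).
Local Notation ptm := (@ptm K E).
Local Notation gtm := (@gtm K E).
Hint Resolve leqv_refl : core.

Record mono := Mono { ca : K; cu : vert E; cp : seq (edge E); cw : vert E; cq : seq (edge E) }.

Definition valid (x : mono) : Prop :=
  chain (cu x) (cp x) /\ chain (cw x) (cq x) /\ rng (cu x) (cp x) = rng (cw x) (cq x).

Definition mterm (x : mono) : T :=
  LScale (ca x) (LMul (ptm (cu x) (cp x)) (gtm (cw x) (cq x))).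

Definition allv (F : seq mono) := forall m, List.In m F -> valid m.

Lemma allv_cat F G : allv F -> allv G -> allv (F ++ G).
Proof. move=> hF hG m; rewrite List.in_app_iff => [[]]; [exact: hF|exact: hG]. Qed.

Lemma lsum1 (x : T) : leqv (lsum [:: x]) x.
Proof. exact: ax_add0. Qed.

Lemma lsum_map_proper (A : Type) (f g : A -> T) (l : seq A) :
  (forall a, List.In a l -> leqv (f a) (g a)) -> leqv (lsum (map f l)) (lsum (map g l)).
Proof.
elim: l => //= a l IH h; rewrite (h a) ?IH //; first by move=> b hb; apply: h; right.
by left.
Qed.

Lemma scale_mul a b (X Y : T) :
  leqv (LMul (LScale a X) (LScale b Y)) (LScale (a * b) (LMul X Y)).
Proof. by rewrite -ax_scaleMl -ax_scaleMr ax_scaleA. Qed.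

Lemma gconcat w q s : chain w q -> chain (rng w q) s ->
  leqv (LMul (gtm (rng w q) s) (gtm w q)) (gtm w (q ++ s)).
Proof.
move=> h1 h2.
have := lstar_leqv Hks (@concat K E _ _ _ h1 h2).
by rewrite /= !lstar_ptm.
Qed.

Lemma ex_tr (z z' : T) : leqv z z' ->
  (exists G, allv G /\ leqv z' (lsum (map mterm G))) ->
  exists G, allv G /\ leqv z (lsum (map mterm G)).
Proof. by move=> h [G [h1 h2]]; exists G; split => //; rewrite h. Qed.

Lemma mprod x y : valid x -> valid y ->
  exists G, allv G /\ leqv (LMul (mterm x) (mterm y)) (lsum (map mterm G)).
Proof.
case: x => a ux px wx qx; case: y => b uy py wy qy.
rewrite /valid /mterm /= => [[cx [cqx rx]]] [cy [cqy ry]].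
apply: (ex_tr (scale_mul _ _ _ _)).
have hA : leqv (LMul (LMul (ptm ux px) (gtm wx qx)) (LMul (ptm uy py) (gtm wy qy)))
   (LMul (ptm ux px) (LMul (LMul (gtm wx qx) (ptm uy py)) (gtm wy qy))).
  by rewrite !ax_mulA.
apply: (ex_tr (leqv_scale (a * b) hA)).
have [I1 [I2 I3]] := @core K E _ _ _ _ cqx cy.
case: (excluded_middle_informative (uy = wx /\ exists s, py = qx ++ s)) => [[e1 [s hs]]|n1].
  exists [:: Mono (a * b) ux (px ++ s) wy qy]; split.
    move=> m [<-|//]; rewrite /valid /=.
    have hs' : chain (rng wx qx) s by move: cy; rewrite hs e1 chain_cat => -[].
    rewrite chain_cat rng_cat rx; split; first by split.
    by split => //; rewrite -ry hs e1 rng_cat.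
  rewrite lsum1 /mterm /= (I1 s e1 hs) -rx.
  have hs' : chain (rng ux px) s by move: cy; rewrite hs e1 chain_cat rx => -[].
  by rewrite -ax_mulA concat.
case: (excluded_middle_informative (uy = wx /\ exists s, qx = py ++ s)) => [[e1 [s hs]]|n2].
  exists [:: Mono (a * b) ux px wy (qy ++ s)]; split.
    move=> m [<-|//]; rewrite /valid /=.
    have hs' : chain (rng wy qy) s by move: cqx; rewrite hs -e1 chain_cat ry => -[].
    rewrite chain_cat rng_cat; split => //; split; first by split.
    by rewrite rx hs rng_cat -e1 ry.
  rewrite lsum1 /mterm /= (I2 s e1 hs) ry.
  have hs' : chain (rng wy qy) s by move: cqx; rewrite hs -e1 chain_cat ry => -[].
  by rewrite gconcat.
exists [::]; split => //=.
rewrite I3 ?lmul0l ?lmul0r ?lscale0 //.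
case: (excluded_middle_informative (uy = wx)) => h; last by left.
right; split => s hs.
  by apply: n1; split => //; exists s.
by apply: n2; split => //; exists s.
Qed.

Lemma mprod_r x G : valid x -> allv G ->
  exists H, allv H /\ leqv (LMul (mterm x) (lsum (map mterm G))) (lsum (map mterm H)).
Proof.
move=> vx; elim: G => [|y G IHG] hG /=.
  by exists [::]; split => //=; apply: lmul0r.
have [H2 [hH2 e2]] := IHG (fun m h => hG m (or_intror h)).
have [H3 [hH3 e3]] := mprod vx (hG y (or_introl erefl)).
exists (H3 ++ H2); split; first exact: allv_cat.
by rewrite ax_mulDr e2 e3 map_cat lsum_cat.
Qed.

Lemma mprod_list F G : allv F -> allv G ->
  exists H, allv H /\ leqv (LMul (lsum (map mterm F)) (lsum (map mterm G))) (lsum (map mterm H)).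
Proof.
move=> hF hG.
elim: F hF => [|x F IH] hF /=.
  by exists [::]; split => //=; apply: lmul0l.
have [H1 [hH1 e1]] := mprod_r (hF x (or_introl erefl)) hG.
have [H2 [hH2 e2]] := IH (fun m h => hF m (or_intror h)).
exists (H1 ++ H2); split; first exact: allv_cat.
by rewrite ax_mulDl e1 e2 map_cat lsum_cat.
Qed.

Lemma nf (z : T) : exists F, allv F /\ leqv z (lsum (map mterm F)).
Proof.
elim: z.
- move=> v; exists [:: Mono 1 v [::] v [::]]; split.
    by move=> m [<-|//].
  by rewrite lsum1 /mterm /= ax_scale1 rel_V1.
- move=> e; exists [:: Mono 1 (gsrc e) [:: e] (grng e) [::]]; split.
    by move=> m [<-|//].
  by rewrite lsum1 /mterm /= ax_scale1 ax_mulA rel_V1 rel_E1r.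
- move=> e; exists [:: Mono 1 (grng e) [::] (gsrc e) [:: e]]; split.
    by move=> m [<-|//].
  by rewrite lsum1 /mterm /= ax_scale1 -ax_mulA rel_V1 rel_E2r.
- by exists [::].
- move=> x [F [hF eF]] y [G [hG eG]]; exists (F ++ G); split; first exact: allv_cat.
  by rewrite map_cat lsum_cat eF eG.
- move=> x [F [hF eF]] y [G [hG eG]].
  have [H [hH eH]] := mprod_list hF hG.
  by exists H; split => //; rewrite eF eG.
- move=> a x [F [hF eF]].
  exists (map (fun m => Mono (a * ca m) (cu m) (cp m) (cw m) (cq m)) F); split.
    move=> m; rewrite List.in_map_iff => -[m' [<- h]].
    by have := hF m' h; rewrite /valid.
  rewrite eF lsum_scale -!map_comp; apply: lsum_map_proper => m _ /=.
  by rewrite /mterm /= ax_scaleA.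
Qed.

End NF.

Lemma eq_big_In (I : Type) (V : nmodType) (F : seq I) (P : pred I) (f g : I -> V) :
  (forall x, List.In x F -> P x -> f x = g x) ->
  \sum_(x <- F | P x) f x = \sum_(x <- F | P x) g x.
Proof.
elim: F => [|a F IH] h; first by rewrite !big_nil.
rewrite !big_cons IH; last by move=> x hx; apply: h; right.
by case: ifP => // Pa; rewrite h //; left.
Qed.

Lemma catI (A : Type) (p s s' : seq A) : p ++ s = p ++ s' -> s = s'.
Proof. by elim: p => //= a p IH [] /IH. Qed.
Lemma catnil (A : Type) (p s : seq A) : p = p ++ s -> s = [::].
Proof. by move=> /(f_equal size); rewrite size_cat => /eqP; rewrite -{1}(addn0 (size p)) eqn_add2l eq_sym => /eqP/size0nil. Qed.

Section TL.
Variables (K : fieldType) (E : graph) (ks : K -> K).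
Hypothesis Hks : field_involution ks.
Variables (R : invAlg ks) (t : lterm K E -> R).
Hypotheses (Htr : is_trace t) (Hlin : is_Klinear t) (Hcan : is_canonical t).
Local Notation T := (lterm K E).
Local Notation Z := (LZero K E).
Local Notation LV := (@LV K E).
Local Notation ptm := (@ptm K E).
Local Notation gtm := (@gtm K E).
Local Notation mono := (mono K E).
Hint Resolve leqv_refl : core.

Lemma tresp (x y : T) : leqv x y -> t x = t y.
Proof. by case: Htr => h _; apply: h. Qed.
Lemma tadd (x y : T) : t (LAdd x y) = t x + t y.
Proof. by case: Htr => _ [h _]. Qed.
Lemma tcomm (x y : T) : t (LMul x y) = t (LMul y x).
Proof. by case: Htr => _ [_ h]. Qed.
Lemma tZ : t Z = 0.
Proof. apply: (addrI (t Z)); rewrite addr0 -tadd; apply: tresp; exact: ax_add0. Qed.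
Lemma tsum (A : seq T) : t (lsum A) = \sum_(a <- A) t a.
Proof. elim: A => [|a A IH] /=; by rewrite ?big_nil ?tZ // big_cons tadd IH. Qed.
Lemma tmul_sum (A B : seq T) :
  t (LMul (lsum A) (lsum B)) = \sum_(a <- A) \sum_(b <- B) t (LMul a b).
Proof.
rewrite (tresp (lsum_mull _ _)) tsum big_map; apply: eq_bigr => a _.
by rewrite (tresp (lsum_mulr _ _)) tsum big_map.
Qed.

Definition tau (v : vert E) : R := t (LV v).

Definition ext (x y : mono) : Prop :=
  cu x = cu y /\ cw x = cw y /\ exists s, cp y = cp x ++ s /\ cq y = cq x ++ s.

Definition Gval (x y : mono) : R :=
  if cb (ext x y) then tau (rng (cu y) (cp y))
  else if cb (ext y x) then tau (rng (cu x) (cp x)) else 0.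

Lemma tpp u p u' p' : chain u p -> chain u' p' -> rng u p = rng u' p' ->
  t (LMul (ptm u p) (gtm u' p')) = if cb (u = u' /\ p = p') then tau (rng u p) else 0.
Proof.
move=> c1 c2 r.
have e : leqv (LMul (ptm u p) (gtm u' p'))
    (LMul (pterm K (topath u p)) (lstar ks (pterm K (topath u' p')))).
  rewrite (@ptm_pterm K E _ _ c1) -(lstar_ptm ks).
  by rewrite (lstar_leqv Hks (@ptm_pterm K E _ _ c2)).
rewrite (tresp e).
have [h1 h2] := Hcan (topath_path c1) (topath_path c2)
   (etrans (topath_rng c1) (etrans r (esym (topath_rng c2)))).
case: cbP => [[e1 e2]|ne].
  subst; rewrite h1 //; by rewrite /tau (topath_rng c2).
rewrite h2 // => eq; apply: ne; exact: topath_inj eq.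
Qed.

Lemma gram (x y : mono) : valid x -> valid y ->
  t (LMul (LMul (ptm (cu x) (cp x)) (gtm (cw x) (cq x)))
          (LMul (ptm (cw y) (cq y)) (gtm (cu y) (cp y)))) = Gval x y.
Proof.
case: x => a ux px wx qx; case: y => b uy py wy qy.
rewrite /valid /Gval /ext /= => [[cx [cqx rx]]] [cy [cqy ry]].
have hA : leqv (LMul (LMul (ptm ux px) (gtm wx qx)) (LMul (ptm wy qy) (gtm uy py)))
   (LMul (ptm ux px) (LMul (LMul (gtm wx qx) (ptm wy qy)) (gtm uy py))).
  by rewrite !ax_mulA.
rewrite (tresp hA).
have [I1 [I2 I3]] := @core K E _ _ _ _ cqx cqy.
case: (excluded_middle_informative (wy = wx /\ exists s, qy = qx ++ s)) => [[e1 [s hs]]|n1].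
  have hs' : chain (rng ux px) s by move: cqy; rewrite hs e1 chain_cat rx => -[].
  rewrite (tresp (leqv_mul (leqv_refl _) (leqv_mul (I1 s e1 hs) (leqv_refl _)))) -rx.
  have e2 : leqv (LMul (ptm ux px) (LMul (ptm (rng ux px) s) (gtm uy py)))
                 (LMul (ptm ux (px ++ s)) (gtm uy py)).
    by rewrite -ax_mulA concat.
  rewrite (tresp e2) tpp; first last.
  - by rewrite rng_cat rx -rng_cat -hs -e1 ry.
  - exact: cy.
  - by apply/chain_cat.
  case: cbP => [[eu ep]|ne].
    rewrite cbT; first by rewrite ep eu.
    by split => //; split; [rewrite e1 | exists s; split].
  rewrite cbF; last first.
    move=> [eu [_ [s' [h1 h2]]]]; apply: ne; split => //.
    have ss : s = s' by apply: (@catI _ qx); rewrite -h2 -hs.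
    by rewrite h1 ss.
  rewrite cbF //.
  move=> [eu [_ [s' [h1 h2]]]].
  have : s ++ s' = [::] by apply: (@catnil _ qx); rewrite catA -hs -h2.
  move=> hss.
  have [s0 s'0] : s = [::] /\ s' = [::] by case: s hss {hs hs' e2 ne} => //; case: s'.
  subst; apply: ne; split => //.
  by rewrite !cats0.
case: (excluded_middle_informative (wy = wx /\ exists s, qx = qy ++ s)) => [[e1 [s hs]]|n2].
  have hs' : chain (rng uy py) s by move: cqx; rewrite hs -e1 chain_cat ry => -[].
  rewrite (tresp (leqv_mul (leqv_refl _) (leqv_mul (I2 s e1 hs) (leqv_refl _)))) -ry.
  rewrite (tresp (leqv_mul (leqv_refl _) (gconcat Hks cy hs'))) tpp; first last.
  - by rewrite rx hs rng_cat -e1 rng_cat ry.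
  - by apply/chain_cat.
  - exact: cx.
  rewrite (cbF (P := (ux = uy /\ wx = wy /\ _))); last first.
    move=> [_ [ew [s' [_ h]]]]; apply: n1; split => //; by exists s'.
  case: cbP => [[eu ep]|ne].
    rewrite cbT //; split => //; split => //; by exists s.
  rewrite cbF //.
  move=> [eu [_ [s' [h1 h2]]]]; apply: ne; split => //.
  have ss : s = s' by apply: (@catI _ qy); rewrite -h2 -hs.
  by rewrite h1 ss.
have h3 : wy <> wx \/ ((forall s, qy <> qx ++ s) /\ (forall s, qx <> qy ++ s)).
  case: (excluded_middle_informative (wy = wx)) => h; last by left.
  right; split => s hs.
    by apply: n1; split => //; exists s.
  by apply: n2; split => //; exists s.
rewrite (tresp (leqv_mul (leqv_refl _) (leqv_mul (I3 h3) (leqv_refl _)))).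
rewrite (tresp (leqv_mul (leqv_refl _) (lmul0l _))) (tresp (lmul0r _)) tZ.
rewrite cbF; last first.
  move=> [_ [ew [s' [_ h]]]]; apply: n1; split => //; by exists s'.
rewrite cbF //.
move=> [_ [ew [s' [_ h]]]]; apply: n2; split => //; by exists s'.
Qed.

Lemma t_mterm x y : valid x -> valid y ->
  t (LMul (mterm x) (lstar ks (mterm y))) = (ca x * ks (ca y)) *: Gval x y.
Proof.
move=> vx vy; rewrite /mterm /= lstar_gtm lstar_ptm (tresp (scale_mul _ _ _ _)) Hlin.
by rewrite gram.
Qed.

Definition Q (F : seq mono) : R :=
  \sum_(x <- F) \sum_(y <- F) (ca x * ks (ca y)) *: Gval x y.

Lemma tQ z F : allv F -> leqv z (lsum (map (@mterm K E) F)) -> t (LMul z (lstar ks z)) = Q F.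
Proof.
move=> hF e.
rewrite (tresp (leqv_mul e (lstar_leqv Hks e))) lstar_lsum tmul_sum big_map.
apply: eq_big_In => x hx _; rewrite -map_comp big_map; apply: eq_big_In => y hy _ /=.
exact: t_mterm (hF x hx) (hF y hy).
Qed.

End TL.

Lemma sum_pmap (V : nmodType) (A B : Type) (h : A -> option B) (g : B -> V) (F : seq A) :
  \sum_(a <- pmap h F) g a = \sum_(x <- F) oapp g 0 (h x).
Proof.
elim: F => [|x F IH] /=; first by rewrite !big_nil.
rewrite big_cons; case: (h x) => [b|] /=; last by rewrite add0r.
by rewrite big_cons IH.
Qed.

Lemma oapp_sum (V : nmodType) (A B : Type) (o : option B) (F : seq A) (k : B -> A -> V) :
  oapp (fun b => \sum_(y <- F) k b y) 0 o = \sum_(y <- F) oapp (fun b => k b y) 0 o.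
Proof. by case: o => [b|] //=; rewrite big1. Qed.

Lemma In_pmap (A B : Type) (h : A -> option B) (F : seq A) (b : B) :
  List.In b (pmap h F) -> exists x, List.In x F /\ h x = Some b.
Proof.
elim: F => [|x F IH] //=.
case e: (h x) => [c|] /=.
  case=> [<-|hb]; first by exists x; split; [left|].
  by have [y [hy ey]] := IH hb; exists y; split; [right|].
by move=> hb; have [y [hy ey]] := IH hb; exists y; split; [right|].
Qed.

Lemma size_pmap_le (A B : Type) (h : A -> option B) (F : seq A) : (size (pmap h F) <= size F)%N.
Proof.
elim: F => //= x F IH; case: (h x) => [b|] /=; first by rewrite ltnS.
exact: leqW.
Qed.

Lemma sum_lt (A : Type) (F : seq A) (a b : A -> nat) (x0 : A) :
  (forall x, (a x <= b x)%N) -> List.In x0 F -> (a x0 < b x0)%N ->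
  (\sum_(x <- F) a x < \sum_(x <- F) b x)%N.
Proof.
move=> hab; elim: F => [|x F IH] //= [<-|h] hlt; rewrite !big_cons.
  by rewrite -addSn; apply: leq_add => //; apply: leq_sum.
rewrite -addnS; apply: leq_add => //; exact: IH.
Qed.

Section Nonneg.
Variables (K : fieldType) (ks : K -> K).
Hypothesis Hks : field_involution ks.
Variable (R : invAlg ks).

Lemma nonneg0 : nonneg (0 : R).
Proof. by exists [::]; rewrite big_nil. Qed.
Lemma nonnegD (x y : R) : nonneg x -> nonneg y -> nonneg (x + y).
Proof. by move=> [zs ->] [ws ->]; exists (zs ++ ws); rewrite big_cat. Qed.
Lemma nonneg_sum (A : Type) (F : seq A) (f : A -> R) :
  (forall a, List.In a F -> nonneg (f a)) -> nonneg (\sum_(a <- F) f a).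
Proof.
elim: F => [|a F IH] h; first by rewrite big_nil; exact: nonneg0.
rewrite big_cons; apply: nonnegD; first by apply: h; left.
by apply: IH => b hb; apply: h; right.
Qed.
Lemma nonnegN (c : K) (x : R) : nonneg x -> nonneg ((c * ks c) *: x).
Proof.
move=> [zs ->]; exists (map (fun z => c *: z) zs).
rewrite big_map scaler_sumr; apply: eq_bigr => z _.
by rewrite ia_starZ ia_mulZl ia_mulZr scalerA.
Qed.

Lemma ks_sum (A : Type) (F : seq A) (P : pred A) (c : A -> K) :
  ks (\sum_(a <- F | P a) c a) = \sum_(a <- F | P a) ks (c a).
Proof.
elim: F => [|a F IH]; first by rewrite !big_nil ks0.
by rewrite !big_cons; case: (P a); rewrite ?ksD // IH.
Qed.

Lemma diag_nonneg (I Key : Type) (c : I -> K) (key : I -> Key) (Dv : R) (L : seq I) :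
  nonneg Dv ->
  nonneg (\sum_(x <- L) \sum_(y <- L) (c x * ks (c y)) *: (if cb (key x = key y) then Dv else 0)).
Proof.
move=> hD; move: {2}(size L) (leqnn (size L)) => n; elim: n L => [|n IH] L.
  by rewrite leqn0 => /nilP ->; rewrite big_nil; exact: nonneg0.
case: L => [|h L] hs; first by rewrite big_nil; exact: nonneg0.
set p := fun x => cb (key x = key h).
set g := fun x y => (c x * ks (c y)) *: (if cb (key x = key y) then Dv else 0).
have split1 : forall (f : I -> R), \sum_(x <- h :: L) f x =
    \sum_(x <- h :: L | p x) f x + \sum_(x <- h :: L | ~~ p x) f x.
  by move=> f; rewrite (bigID p) /=.
rewrite split1.
have e1 : \sum_(x <- h :: L | p x) \sum_(y <- h :: L) g x y =
          \sum_(x <- h :: L | p x) \sum_(y <- h :: L | p y) (c x * ks (c y)) *: Dv.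
  apply: eq_bigr => x px; rewrite split1 [X in _ + X]big1 ?addr0.
    apply: eq_bigr => y py; rewrite /g cbT //.
    by move: px py => /cbP -> /cbP ->.
  move=> y npy; rewrite /g cbF ?scaler0 //.
  move: px npy => /cbP ex /negP ny exy; apply: ny; apply/cbP; by rewrite -exy ex.
have e2 : \sum_(x <- h :: L | ~~ p x) \sum_(y <- h :: L) g x y =
          \sum_(x <- h :: L | ~~ p x) \sum_(y <- h :: L | ~~ p y) g x y.
  apply: eq_bigr => x px; rewrite split1 big1 ?add0r //.
  move=> y py; rewrite /g cbF ?scaler0 //.
  move: px py => /negP nx /cbP ey exy; apply: nx; apply/cbP; by rewrite exy ey.
rewrite e1 e2; apply: nonnegD.
  have -> : \sum_(x <- h :: L | p x) \sum_(y <- h :: L | p y) (c x * ks (c y)) *: Dv =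
      ((\sum_(x <- h :: L | p x) c x) * ks (\sum_(y <- h :: L | p y) c y)) *: Dv.
    rewrite ks_sum mulr_suml scaler_suml; apply: eq_bigr => x _.
    by rewrite mulr_sumr scaler_suml.
  exact: nonnegN.
rewrite -big_filter; under eq_bigr do rewrite -big_filter.
apply: IH.
rewrite /= /p cbT //= -ltnS; apply: leq_trans hs.
by rewrite /= ltnS size_filter count_size.
Qed.

End Nonneg.

Lemma cb_iff (P Q : Prop) : (P <-> Q) -> cb P = cb Q.
Proof. move=> h; case: (cbP P) => hp; case: (cbP Q) => hq //; tauto. Qed.

Lemma cat1I (A : Type) (p p' : seq A) (e : A) : p ++ [:: e] = p' ++ [:: e] -> p = p'.
Proof.
move: p'; elim: p => [|a p IH] [|b p'] //=; first by case: p' => [|? ?] [].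
  by case: p {IH} => [|? ?] [].
by case=> -> /IH ->.
Qed.

Section Comb.
Variables (K : fieldType) (E : graph) (ks : K -> K).
Hypothesis Hks : field_involution ks.
Variables (R : invAlg ks) (t : lterm K E -> R).
Local Notation mono := (mono K E).
Local Notation G := (Gval t).
Local Notation tau := (tau t).

Definition triv (x : mono) : bool := if cq x is [::] then true else false.
Definition isE (e : edge E) (x : mono) : bool := cb (exists q', cq x = e :: q').
Definition sh (e : edge E) (x : mono) : mono :=
  Mono (ca x) (cu x) (cp x ++ [:: e]) (grng e) [::].
Definition tl (e : edge E) (x : mono) : mono :=
  Mono (ca x) (cu x) (cp x) (grng e) (behead (cq x)).
Definition ff (x y : mono) : R := (ca x * ks (ca y)) *: G x y.
Definition same (x y : mono) : bool := cb ((cu x, cp x) = (cu y, cp y)).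
Definition dq (D : R) (x y : mono) : R :=
  if triv x && triv y then (ca x * ks (ca y)) *: (if same x y then D else 0) else 0.
Definition DQ (F : seq mono) (D : R) : R := \sum_(x <- F) \sum_(y <- F) dq D x y.
Definition mu (F : seq mono) : nat := (\sum_(x <- F) (size (cq x)).+1)%N.

Lemma ext_both (x y : mono) : ext x y -> ext y x -> cu x = cu y /\ cp x = cp y.
Proof.
move=> [eu [_ [s [h1 _]]]] [_ [_ [s' [h2 _]]]]; split => //.
have : s ++ s' = [::] by apply: (@catnil _ (cp x)); rewrite catA -h1 -h2.
by case: s h1 {h2} => [|a s] -> // _; rewrite cats0.
Qed.

Lemma Gsym (x y : mono) : G x y = G y x.
Proof.
rewrite /Gval; case: (cbP (ext x y)) => hxy; case: (cbP (ext y x)) => hyx //.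
by have [-> ->] := ext_both hxy hyx.
Qed.

Lemma Gv (x y : mono) : cw x <> cw y -> G x y = 0.
Proof.
move=> ne; rewrite /Gval cbF; last by move=> [_ [h _]].
by rewrite cbF //; move=> [_ [h _]]; apply: ne.
Qed.

Lemma Gtriv (x y : mono) : cq x = [::] -> cq y = [::] -> cw x = cw y ->
  G x y = if same x y then tau (rng (cu y) (cp y)) else 0.
Proof.
move=> hx hy hw.
have h1 : cb (ext x y) = same x y.
  apply: cb_iff; rewrite /ext hx hy; split.
    by move=> [eu [_ [s [hp hq]]]]; move: hq hp => /= <-; rewrite cats0 => ->; rewrite eu.
  by move=> [eu ep]; split => //; split => //; exists [::]; rewrite cats0.
have h2 : cb (ext y x) = same x y.
  apply: cb_iff; rewrite /ext hx hy; split.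
    by move=> [eu [_ [s [hp hq]]]]; move: hq hp => /= <-; rewrite cats0 => ->; rewrite eu.
  by move=> [eu ep]; split => //; split => //; exists [::]; rewrite cats0.
rewrite /Gval h1 h2; case: (same x y) => //.
Qed.

Lemma G2 e (x y : mono) q' : cq x = [::] -> cq y = e :: q' -> cw x = cw y ->
  G (sh e x) (tl e y) = G x y.
Proof.
move=> hx hy hw.
have h1 : cb (ext (sh e x) (tl e y)) = cb (ext x y).
  apply: cb_iff; rewrite /ext /= hx hy /=; split.
    by move=> [eu [_ [s [hp hq]]]]; split => //; split => //; exists (e :: q'); rewrite hp -hq -catA.
  by move=> [eu [_ [s [hp hq]]]]; split => //; split => //; exists q'; rewrite hp -hq -catA.
have h2 : ext (tl e y) (sh e x) -> ext (sh e x) (tl e y).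
  rewrite /ext /= hy /= => -[eu [_ [s [hp hq]]]].
  case: q' hq hy => // hq' hy; case: s hp hq' => // hp _.
  split => //; split => //; exists [::]; by rewrite hp !cats0.
have h3 : ~ ext y x by rewrite /ext hx hy => -[_ [_ [s [_ //]]]].
rewrite /Gval h1; case: (cbP (ext x y)) => //= hxy.
rewrite cbF; last by move=> h; apply: hxy; apply/cbP; rewrite -h1; apply/cbP; exact: h2 h.
by rewrite cbF.
Qed.

Lemma G3 e (x y : mono) qx qy : cq x = e :: qx -> cq y = e :: qy -> cw x = cw y ->
  G (tl e x) (tl e y) = G x y.
Proof.
move=> hx hy hw.
have h1 : forall a b qa qb, cq a = e :: qa -> cq b = e :: qb -> cw a = cw b ->
    cb (ext (tl e a) (tl e b)) = cb (ext a b).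
  move=> a b qa qb ha hb hab; apply: cb_iff; rewrite /ext /= ha hb /=; split.
    by move=> [eu [_ [s [hp hq]]]]; split => //; split => //; exists s; rewrite hp hq.
  by move=> [eu [_ [s [hp [hq]]]]]; split => //; split => //; exists s.
by rewrite /Gval (h1 _ _ _ _ hx hy hw) (h1 _ _ _ _ hy hx (esym hw)).
Qed.

Lemma G4 e f (x y : mono) qx qy : cq x = e :: qx -> cq y = f :: qy -> e <> f -> G x y = 0.
Proof.
move=> hx hy ne; rewrite /Gval cbF; last by rewrite /ext hx hy => -[_ [_ [s [_ [h _]]]]]; apply: ne.
by rewrite cbF // /ext hx hy => -[_ [_ [s [_ [h _]]]]]; apply: ne.
Qed.

Definition qq (h : mono -> option mono) (x y : mono) : R :=
  match h x, h y with Some a, Some b => ff a b | _, _ => 0 end.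
Definition qd (h : mono -> option mono) (D : R) (x y : mono) : R :=
  match h x, h y with Some a, Some b => dq D a b | _, _ => 0 end.

Lemma Q_pmap (h : mono -> option mono) (F : seq mono) : Q t (pmap h F) = \sum_(x <- F) \sum_(y <- F) qq h x y.
Proof.
rewrite /Q sum_pmap; apply: eq_bigr => x _; rewrite /qq.
case: (h x) => [a|] /=; last by rewrite big1.
rewrite sum_pmap; apply: eq_bigr => y _; by case: (h y).
Qed.

Lemma DQ_pmap (h : mono -> option mono) (F : seq mono) D : DQ (pmap h F) D = \sum_(x <- F) \sum_(y <- F) qd h D x y.
Proof.
rewrite /DQ sum_pmap; apply: eq_bigr => x _; rewrite /qd.
case: (h x) => [a|] /=; last by rewrite big1.
rewrite sum_pmap; apply: eq_bigr => y _; by case: (h y).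
Qed.

Lemma dq0 (x y : mono) : dq 0 x y = 0.
Proof. by rewrite /dq if_same scaler0 if_same. Qed.

Lemma DQ0 (F : seq mono) : DQ F 0 = 0.
Proof. by rewrite /DQ big1 // => x _; rewrite big1 // => y _; rewrite dq0. Qed.

End Comb.

Lemma lem4 (V : zmodType) (A u w : V) : A - w = u + (A - (u + w)).
Proof. by rewrite opprD addrCA addNKr. Qed.

Section S.
Variables (K : fieldType) (E : graph) (ks : K -> K).
Hypothesis Hks : field_involution ks.
Variables (R : invAlg ks) (t : lterm K E -> R).
Hypothesis HP : forall v J, List.NoDup J -> (forall e, List.In e J -> gsrc e = v) ->
  nonneg (tau t v - \sum_(e <- J) tau t (grng e)).
Local Notation mono := (mono K E).
Local Notation G := (Gval t).
Local Notation ff := (@ff K E ks R t).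
Local Notation dq := (@dq K E ks R).
Local Notation DQ := (@DQ K E ks R).
Local Notation qq := (@qq K E ks R t).
Local Notation qd := (@qd K E ks R).

Lemma mu_pmap (h : mono -> option mono) (F : seq mono) :
  mu (pmap h F) = (\sum_(x <- F) oapp (fun a => (size (cq a)).+1) 0%N (h x))%N.
Proof. by rewrite /mu sum_pmap. Qed.

Lemma Smain n : forall (F : seq mono), (mu F <= n)%N -> forall v J,
  (forall x, List.In x F -> valid x /\ cw x = v) -> List.NoDup J ->
  (forall e, List.In e J -> gsrc e = v) ->
  (forall x e q', List.In x F -> cq x = e :: q' -> ~ List.In e J) ->
  nonneg (Q t F - DQ F (\sum_(e <- J) tau t (grng e))).
Proof.
elim: n => [|n IH] F hmu v J hF hJ hJs hJF.
  case: F hmu {hF hJF} => [|x F]; last by rewrite /mu big_cons.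
  by rewrite /Q /DQ !big_nil subr0 => _; exact: nonneg0.
case: (excluded_middle_informative (exists x e q0, List.In x F /\ cq x = e :: q0))
  => [[x0 [e [q0 [hx0 hq0]]]]|nA]; last first.
  have htr : forall x, List.In x F -> cq x = [::].
    move=> x hx; case hq: (cq x) => [|e q0] //; case: nA; by exists x, e, q0.
  have -> : Q t F - DQ F (\sum_(e <- J) tau t (grng e)) =
      \sum_(x <- F) \sum_(y <- F) (ca x * ks (ca y)) *:
         (if cb ((cu x, cp x) = (cu y, cp y)) then tau t v - \sum_(e <- J) tau t (grng e) else 0).
    rewrite /Q /DQ -sumrB; apply: eq_big_In => x hx _; rewrite -sumrB; apply: eq_big_In => y hy _.
    have [[_ [_ rx]] wx] := hF x hx; have [[_ [_ ry]] wy] := hF y hy.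
    rewrite /dq /triv (htr x hx) (htr y hy) /= (Gtriv t (htr x hx) (htr y hy)); last by rewrite wx wy.
    rewrite ry (htr y hy) /= wy /same; case: cbP => _; by rewrite ?scaler0 ?subr0 ?scalerBr.
  apply: diag_nonneg => //; exact: HP.
have [[_ [cq0 _]] wx0] := hF x0 hx0.
have se : gsrc e = v by move: cq0; rewrite hq0 wx0 => -[].
have eJ : ~ List.In e J := hJF x0 e q0 hx0 hq0.
pose hE := fun x : mono => if triv x then Some (sh e x) else if isE e x then Some (tl e x) else None.
pose hR := fun x : mono => if isE e x then None else Some x.
have cls : forall x : mono, (cq x = [::] /\ triv x /\ ~~ isE e x) \/
    (exists q', cq x = e :: q' /\ ~~ triv x /\ isE e x) \/
    (exists f q', cq x = f :: q' /\ f <> e /\ ~~ triv x /\ ~~ isE e x).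
  move=> x; rewrite /triv /isE; case hq: (cq x) => [|f q'].
    by left; rewrite cbF // => -[q' []].
  case: (excluded_middle_informative (f = e)) => [fe|fe].
    by right; left; exists q'; subst f; rewrite cbT //; exists q'.
  right; right; exists f, q'; rewrite cbF //; by move=> [q'' [fe' _]]; apply: fe.
have key : Q t F - DQ F (\sum_(e <- J) tau t (grng e)) =
   Q t (pmap hE F) + (Q t (pmap hR F) - DQ (pmap hR F) (\sum_(e' <- e :: J) tau t (grng e'))).
  rewrite Q_pmap DQ_pmap Q_pmap /Q /DQ -!sumrB -big_split.
  apply: eq_big_In => x hx _; rewrite -!sumrB -big_split; apply: eq_big_In => y hy _ /=.
  have wxy : cw x = cw y by rewrite (hF x hx).2 (hF y hy).2.
  rewrite big_cons /qq /qd /hE /hR.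
  have Cx := cls x; have Cy := cls y.
  case: Cx => [[hqx [tx nex]]|[[qx [hqx [ntx ex']]]|[fx [qx [hqx [fxe [ntx nex]]]]]]];
  case: Cy => [[hqy [ty ney]]|[[qy [hqy [nty ey']]]|[fy [qy [hqy [fye [nty ney]]]]]]].
  - rewrite ?tx ?ty ?(negbTE nex) ?(negbTE ney) /= /ff /dq ?tx ?ty /=.
    rewrite (@Gtriv K E ks R t (sh e x) (sh e y)) //=.
    have ss : same (sh e x) (sh e y) = same x y.
      rewrite /same; apply: cb_iff => /=; split => h; case: h => h1 h2; [by rewrite h1 (cat1I h2)|by rewrite h1 h2].
    rewrite ss rng_cat /=; case: (same x y); rewrite ?scaler0 ?subr0 ?add0r // scalerDr.
    exact: lem4.
  - rewrite ?tx ?(negbTE nex) ?(negbTE nty) ?ey' /= /ff /dq ?tx ?(negbTE nty) /=.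
    by rewrite (@G2 K E ks R t e x y qy hqx hqy wxy) ?subr0 ?subrr ?addr0.
  - rewrite ?tx ?(negbTE nex) ?(negbTE nty) ?(negbTE ney) /= /ff /dq ?tx ?(negbTE nty) /=.
    by rewrite subr0 add0r.
  - rewrite ?ty ?(negbTE ney) ?(negbTE ntx) ?ex' /= /ff /dq ?ty ?(negbTE ntx) /=.
    by rewrite [G (tl e x) _]Gsym (@G2 K E ks R t e y x qx hqy hqx (esym wxy)) [G y x]Gsym ?subr0 ?subrr ?addr0.
  - rewrite ?(negbTE ntx) ?ex' ?(negbTE nty) ?ey' /= /ff /dq ?(negbTE ntx) /=.
    by rewrite (@G3 K E ks R t e x y qx qy hqx hqy wxy) ?subr0 ?subrr ?addr0.
  - rewrite ?(negbTE ntx) ?ex' ?(negbTE nty) ?(negbTE ney) /= /ff /dq ?(negbTE ntx) /=.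
    by rewrite (@G4 K E ks R t e fy x y qx qy hqx hqy (fun h => fye (esym h))) scaler0 ?subr0 ?subrr ?addr0.
  - rewrite ?(negbTE ntx) ?(negbTE nex) ?ty ?(negbTE ney) /= /ff /dq ?(negbTE ntx) /=.
    by rewrite subr0 add0r.
  - rewrite ?(negbTE ntx) ?(negbTE nex) ?(negbTE nty) ?ey' /= /ff /dq ?(negbTE ntx) /=.
    by rewrite (@G4 K E ks R t fx e x y qx qy hqx hqy fxe) scaler0 ?subr0 ?subrr ?addr0.
  - rewrite ?(negbTE ntx) ?(negbTE nex) ?(negbTE nty) ?(negbTE ney) /= /ff /dq ?(negbTE ntx) /=.
    by rewrite subr0 add0r.
have tx0 : triv x0 = false by rewrite /triv hq0.
have ix0 : isE e x0 by rewrite /isE cbT //; exists q0.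
rewrite key; apply: nonnegD.
  have hmuE : (mu (pmap hE F) <= n)%N.
    rewrite -ltnS; apply: leq_trans hmu; rewrite mu_pmap /mu.
    apply: (@sum_lt _ F (fun x => oapp (fun a => (size (cq a)).+1) 0%N (hE x)) (fun x => (size (cq x)).+1) x0) => //.
      move=> x; rewrite /hE; case: (cls x) => [[hqx [-> _]]|[[qx [hqx [/negbTE -> ->]]]|[fx [qx [hqx [_ [/negbTE -> /negbTE ->]]]]]]] //=.
      by rewrite hqx.
    by rewrite /hE tx0 ix0 /= hq0.
  have hFE : forall a, List.In a (pmap hE F) -> valid a /\ cw a = grng e.
    move=> a ha; have [x [hx]] := In_pmap ha; have [[cx [cqx rx]] wx] := hF x hx.
    rewrite /hE; case: (cls x) => [[hqx [-> _]]|[[qx [hqx [/negbTE -> ->]]]|[fx [qx [hqx [_ [/negbTE -> /negbTE ->]]]]]]] //= [<-].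
      rewrite /valid /= chain_cat rng_cat /= rx hqx /= wx se.
      by [].
    move: cqx; rewrite hqx wx /= => -[_ cqx].
    by rewrite /valid /= rx hqx wx.
  have := IH (pmap hE F) hmuE (grng e) [::] hFE (List.NoDup_nil _)
     (fun _ h => False_ind _ h) (fun _ _ _ _ _ h => h).
  by rewrite big_nil DQ0 subr0.
have hmuR : (mu (pmap hR F) <= n)%N.
  rewrite -ltnS; apply: leq_trans hmu; rewrite mu_pmap /mu.
  apply: (@sum_lt _ F (fun x => oapp (fun a => (size (cq a)).+1) 0%N (hR x)) (fun x => (size (cq x)).+1) x0) => //.
    by move=> x; rewrite /hR; case: (isE e x).
  by rewrite /hR ix0.
apply: (IH (pmap hR F) hmuR v (e :: J)).
- move=> a ha; have [x [hx]] := In_pmap ha; rewrite /hR; case: (isE e x) => // -[<-]; exact: hF.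
- by constructor.
- by move=> f [<-|hf]; [|exact: hJs].
- move=> a f q' ha; have [x [hx]] := In_pmap ha; rewrite /hR; case ix: (isE e x) => // -[<-] hq [fe|hf].
    by move: ix; rewrite /isE cbT //; exists q'; rewrite hq fe.
  exact: (hJF x f q' hx hq hf).
Qed.

End S.

Section Fin.
Variables (K : fieldType) (E : graph) (ks : K -> K).
Hypothesis Hks : field_involution ks.
Variables (R : invAlg ks) (t : lterm K E -> R).
Hypothesis HP : forall v J, List.NoDup J -> (forall e, List.In e J -> gsrc e = v) ->
  nonneg (tau t v - \sum_(e <- J) tau t (grng e)).
Local Notation mono := (mono K E).

Lemma Qnonneg (F : seq mono) : allv F -> nonneg (Q t F).
Proof.
move: {2}(size F) (leqnn (size F)) => n; elim: n F => [|n IH] F.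
  by rewrite leqn0 => /nilP -> _; rewrite /Q big_nil; exact: nonneg0.
case: F => [|h F] hs hF; first by rewrite /Q big_nil; exact: nonneg0.
set v := cw h.
pose hv := fun x : mono => if cb (cw x = v) then Some x else None.
pose hn := fun x : mono => if cb (cw x = v) then None else Some x.
have -> : Q t (h :: F) = Q t (pmap hv (h :: F)) + Q t (pmap hn (h :: F)).
  rewrite !Q_pmap /Q -big_split; apply: eq_bigr => x _; rewrite -big_split.
  apply: eq_bigr => y _; rewrite /qq /hv /hn.
  case: (cbP (cw x = v)) => hx; case: (cbP (cw y = v)) => hy /=; rewrite ?addr0 ?add0r //.
    by rewrite Gv ?scaler0 // => e; apply: hy; rewrite -e.
  by rewrite Gv ?scaler0 // => e; apply: hx; rewrite e.
apply: nonnegD.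
  have := @Smain K E ks Hks R t HP _ (pmap hv (h :: F)) (leqnn _) v [::].
  rewrite big_nil DQ0 subr0; apply => //.
  - move=> a ha; have [x [hx]] := In_pmap ha; rewrite /hv; case: cbP => // ex [<-].
    by split => //; apply: hF.
  - exact: List.NoDup_nil.
  - by move=> ? ? ? _ _ [].
apply: IH.
  have : (size (pmap hn (h :: F)) <= size F)%N.
    by rewrite /= /hn cbT //=; exact: size_pmap_le.
  by move=> /leq_trans; apply; rewrite -ltnS.
move=> a ha; have [x [hx]] := In_pmap ha; rewrite /hn; case: cbP => // ex [<-].
exact: hF.
Qed.

End Fin.

Lemma sum_delta (A : Type) (V : zmodType) (I : seq A) (e : A) (c : V) :
  List.NoDup I -> List.In e I -> \sum_(f <- I) (if cb (e = f) then c else 0) = c.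
Proof.
elim: I => [|f I IH] //= hI; inversion hI as [|f' I' nf hI' [eq1 eq2]]; subst.
rewrite big_cons; case=> [<-|hin].
  rewrite cbT // (@eq_big_In _ _ I xpredT _ (fun _ => 0)) ?big1 ?addr0 // => g hg _.
  by rewrite cbF // => eg; apply: nf; rewrite eg.
rewrite cbF ?add0r; first exact: IH.
by move=> ef; subst.
Qed.

Section Main.
Variables (K : fieldType) (E : graph) (ks : K -> K).
Hypothesis Hks : field_involution ks.
Variables (R : invAlg ks) (t : lterm K E -> R).
Hypotheses (Htr : is_trace t) (Hlin : is_Klinear t) (Hcan : is_canonical t).
Local Notation mono := (mono K E).
Hint Resolve leqv_refl : core.

Lemma HP_of_condP : condP t -> forall v J, List.NoDup J -> (forall e, List.In e J -> gsrc e = v) ->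
  nonneg (tau t v - \sum_(e <- J) tau t (grng e)).
Proof.
move=> hC v J hJ hs; have := hC v J hJ hs.
by rewrite (tadd Htr) Hlin (tsum Htr) big_map scaleN1r.
Qed.

Lemma P_to_pos : condP t -> is_positive t.
Proof.
move=> hC x [zs hx]; rewrite (tresp Htr hx) (tsum Htr) big_map.
apply: nonneg_sum => z _.
have [F [hF eF]] := nf Hks z.
rewrite (tQ Hks Htr Hlin Hcan hF eF).
exact: (Qnonneg Hks (HP_of_condP hC) hF).
Qed.

Definition m0 (v : vert E) : mono := Mono 1 v [::] v [::].
Definition me (v : vert E) (e : edge E) : mono := Mono (-1) v [:: e] v [:: e].

Lemma G00 v : Gval t (m0 v) (m0 v) = tau t v.
Proof. by rewrite /Gval cbT //; split => //; split => //; exists [::]. Qed.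
Lemma G0f v f : Gval t (m0 v) (me v f) = tau t (grng f).
Proof. by rewrite /Gval cbT //; split => //; split => //; exists [:: f]. Qed.
Lemma Gef v e f : Gval t (me v e) (me v f) = if cb (e = f) then tau t (grng e) else 0.
Proof.
case: cbP => [<-|ne]; first by rewrite /Gval cbT //; split => //; split => //; exists [::].
rewrite /Gval cbF; last by move=> [_ [_ [s [[h _] _]]]]; apply: ne.
by rewrite cbF // => -[_ [_ [s [[h _] _]]]]; apply: ne.
Qed.

Lemma pos_to_P : is_positive t -> condP t.
Proof.
move=> hpos v I hI hs.
pose F := m0 v :: map (me v) I.
pose z := LAdd (LV K v) (LScale (-1) (lsum [seq LMul (LE K e) (LG K e) | e <- I])).
have hF : allv F.
  move=> m [<-|]; first by [].
  move=> /List.in_map_iff [e [<- he]].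
  by rewrite /valid /= (hs e he).
have ez : leqv z (lsum (map (@mterm K E) F)).
  rewrite /z /= /mterm /= ax_scale1 rel_V1 lsum_scale -!map_comp.
  apply: leqv_add => //; apply: lsum_map_proper => e _ /=.
  by rewrite rel_E1r rel_E2r.
have hz : nonneg (t (LMul z (lstar ks z))).
  by apply: hpos; exists [:: z]; symmetry; exact: ax_add0.
suff -> : t (LAdd (LV K v) (LScale (-1) (lsum [seq LV K (grng e) | e <- I]))) =
          t (LMul z (lstar ks z)) by [].
rewrite (tQ Hks Htr Hlin Hcan hF ez) (tadd Htr) Hlin (tsum Htr) big_map scaleN1r.
rewrite /Q /F big_cons big_map big_cons big_map G00 (ks1 Hks) mulr1 scale1r.
have r0 : \sum_(j <- I) (ca (m0 v) * ks (ca (me v j))) *: Gval t (m0 v) (me v j)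
    = - \sum_(j <- I) tau t (grng j).
  rewrite -sumrN; apply: eq_bigr => j _.
  by rewrite G0f /= (ksN1 Hks) mul1r scaleN1r.
have r1 : \sum_(j <- I) \sum_(y <- m0 v :: [seq me v i | i <- I])
        (ca (me v j) * ks (ca y)) *: Gval t (me v j) y = 0.
  rewrite (@eq_big_In _ _ I xpredT _ (fun _ => 0)) ?big1 // => e he _.
  rewrite big_cons big_map /= (Gsym t) G0f (ks1 Hks) mulr1 scaleN1r.
  rewrite (@eq_big_In _ _ I xpredT _ (fun f => if cb (e = f) then tau t (grng e) else 0)).
    by rewrite (sum_delta _ hI he) addNr.
  by move=> f _ _; rewrite Gef (ksN1 Hks) mulrNN mulr1 scale1r.
by rewrite r0 r1 addr0.
Qed.

End Main.

Theorem theorem3p4 (K : fieldType) (ks : K -> K) (Hks : field_involution ks)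
  (E : graph) (R : invAlg ks) (t : lterm K E -> R) :
  is_trace t -> is_Klinear t -> is_canonical t ->
  (is_positive t <-> condP t).
Proof.
move=> Htr Hlin Hcan; split; [exact: pos_to_P | exact: P_to_pos].
Qed.
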